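(* Let $X$ be a separable completely metrizable space and $T:X\to X$ continuous. The following are equivalent: (i) $T$ is quasi-rigid; (ii) $T$ is topologically quasi-rigid; (iii) $T_{(N)}$ is topologically recurrent for every $N\in\mathbb{N}$; (iv) $T_{(N)}$ is recurrent for every $N\in\mathbb{N}$.
   Context: For $N\in\mathbb{N}$, $T_{(N)}:X^N\to X^N$, $T_{(N)}(x_1,\dots,x_N)=(Tx_1,\dots,Tx_N)$. A point $x$ is recurrent for a map $S$ if $x\in\overline{\{S^nx:n\geq1\}}$; $S$ is recurrent if its set of recurrent points is dense. $S$ is topologically recurrent if for every non-empty open $U$ there is $n\in\mathbb{N}$ with $S^n(U)\cap U\neq\varnothing$. $T$ is quasi-rigid if there exist a strictly increasing sequence $(n_k)$ of positive integers and a dense $Y\subset X$ with $T^{n_k}x\to x$ for all $x\in Y$. $T$ is topologically quasi-rigid if there exists a strictly increasing sequence $(n_k)$ such that for every non-empty open $U$ there is $k_U$ with $T^{n_k}(U)\cap U\neq\varnothing$ for all $k\geq k_U$. *)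

(* Defs.v *)
From HB Require Import structures.
From mathcomp Require Import all_boot all_order all_algebra.
From mathcomp Require Import all_classical all_reals all_analysis.
Set Implicit Arguments. Unset Strict Implicit. Unset Printing Implicit Defensive.
Import Order.TTheory GRing.Theory Num.Theory.
Local Open Scope classical_set_scope.

Definition separable_space (Y : topologicalType) : Prop :=
  exists D : set Y, countable D /\ dense D.

Definition diagN (X : topologicalType) (N : nat) (T : X -> X) :
  {ptws 'I_N -> X} -> {ptws 'I_N -> X} :=
  fun x i => T (x i).
Arguments diagN {X} N T _ _.

Definition recurrent_point (Y : topologicalType) (S : Y -> Y) (x : Y) : Prop :=
  closure [set iter n.+1 S x | n in [set: nat]] x.

Definition recurrent (Y : topologicalType) (S : Y -> Y) : Prop :=
  dense [set x | recurrent_point S x].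

Definition top_recurrent (Y : topologicalType) (S : Y -> Y) : Prop :=
  forall U : set Y, open U -> U !=set0 ->
    exists n : nat, (0 < n)%N /\ (iter n S @` U) `&` U !=set0.

Definition quasi_rigid (Y : topologicalType) (T : Y -> Y) : Prop :=
  exists (n : nat -> nat) (D : set Y),
    {homo n : a b / (a < b)%N} /\ dense D /\
    forall x, D x -> (fun k => iter (n k) T x) @ \oo --> x.

Definition top_quasi_rigid (Y : topologicalType) (T : Y -> Y) : Prop :=
  exists n : nat -> nat,
    {homo n : a b / (a < b)%N} /\
    forall U : set Y, open U -> U !=set0 ->
      exists kU : nat, forall k, (kU <= k)%N -> (iter (n k) T @` U) `&` U !=set0.

(* Main.v *)
Require Import Defs.
From HB Require Import structures.
From mathcomp Require Import all_boot all_order all_algebra.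
From mathcomp Require Import all_classical all_reals all_analysis.
From mathcomp Require Import lra.
Import Order.TTheory GRing.Theory Num.Theory.
Local Open Scope classical_set_scope.
Local Open Scope ring_scope.

Lemma ptws_cvg (I : eqType) (X : topologicalType) (F : set_system (I -> X))
  (f : I -> X) : Filter F ->
  (forall i, (fun g => g i) @ F --> f i) -> F --> (f : {ptws I -> X}).
Proof.
move=> FF H.
apply/cvg_sup => i A /=.
rewrite (@nbhsE (initial_topology (fun g : I -> X => g i))) /= => -[B [oB Bf] BA].
case: oB => C oC CB.
have Cf : C (f i). move: Bf; rewrite -CB. by []. 
have : nbhs (f i) C. rewrite nbhsE /=. exists C => //.
move=> /H HC; rewrite nbhs_simpl.
have sub : [set g : I -> X | C (g i)] `<=` A by move=> g Cg; apply: BA; rewrite -CB.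
exact: (filterS sub HC).
Qed.

Lemma ptws_proj (I : eqType) (X : topologicalType) (f : {ptws I -> X}) (i : I)
  (U : set X) : nbhs (f i) U -> \forall g \near f, U (g i).
Proof.
move=> Ui; have := @proj_continuous I (fun _ => X) i f U Ui. by [].
Qed.


Lemma iter_diagN (X : topologicalType) N (T : X -> X) n (f : {ptws 'I_N -> X}) :
  iter n (diagN N T) f = fun i => iter n T (f i).
Proof. by elim: n => [|n IH] //=; rewrite IH. Qed.

Lemma iv_iii (Y : topologicalType) (S : Y -> Y) : recurrent S -> top_recurrent S.
Proof.
move=> rS U oU U0.
have [x [Ux rx]] := rS U U0 oU.
have : nbhs x U by apply: open_nbhs_nbhs.
move=> /rx [y [[n _ <-] Uy]].
exists n.+1; split => //; exists (iter n.+1 S x); split => //; exists x => //.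
Qed.

Lemma i_ii (X : topologicalType) (T : X -> X) : quasi_rigid T -> top_quasi_rigid T.
Proof.
move=> [n [D [hn [dD cv]]]]; exists n; split => // U oU U0.
have [x [Ux Dx]] := dD U U0 oU.
have : nbhs x U by apply: open_nbhs_nbhs.
move=> /(cv x Dx) [K _ HK]; exists K => k Kk.
exists (iter (n k) T x); split; last exact: HK.
by exists x.
Qed.

Lemma inv_small (R : realType) (e : R) : 0 < e ->
  exists M : nat, forall m, (M <= m)%N -> m.+1%:R^-1 < e.
Proof.
move=> e0; have [M _ HM] := nbhs_infty_gtr e^-1.
exists M => m Mm.
rewrite invf_plt ?posrE ?ltr0n //.
apply: lt_le_trans (HM m Mm) _; rewrite ler_nat; exact: leqnSn.
Qed.

Lemma dense_ball (R : realType) (X : pseudoMetricType R) (D : set X) (x : X) (e : R) :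
  dense D -> 0 < e -> exists d, D d /\ ball x e d.
Proof.
move=> dD e0.
have [Ox xO] := open_nbhs_ball x (PosNum e0).
have [d [Bd Dd]] := dD _ (ex_intro _ x xO) Ox.
by exists d; split => //; apply: interior_subset.
Qed.
Arguments dense_ball {R X D} x {e}.
Arguments inv_small {R e}.

Lemma i_iv (R : realType) (X : pseudoMetricType R) (T : X -> X) :
  quasi_rigid T -> forall N : nat, (0 < N)%N -> recurrent (diagN N T).
Proof.
move=> [n [D [hn [dD cv]]]] N N0 O [f Of] oO.
have ip : forall m : nat, 0 < (m.+1%:R : R)^-1 by move=> m; rewrite invr_gt0.
have [u Hu] := choice (fun mi : nat * 'I_N =>
  dense_ball (f mi.2) dD (ip mi.1)).
pose v := fun m => (fun i => u (m, i)) : {ptws 'I_N -> X}.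
have vf : v @ \oo --> (f : {ptws 'I_N -> X}).
  apply: ptws_cvg => i; apply/cvg_ballP => e e0.
  have [M HM] := inv_small e0.
  suff : \forall m \near \oo, ball (f i) e (v m i) by [].
  apply: filterS (nbhs_infty_ge M) => m Mm /=.
  have [_ Bm] := Hu (m, i).
  exact: (le_ball (ltW (HM m Mm)) Bm).
have : nbhs (f : {ptws 'I_N -> X}) O by apply: open_nbhs_nbhs.
move=> /vf [M _ HM].
have OvM : O (v M) by exact: (HM M (leqnn M)).
exists (v M); split => //.
move=> B BvM.
have cvv : (fun k => iter (n k) (diagN N T) (v M)) @ \oo --> (v M : {ptws 'I_N -> X}).
  apply: ptws_cvg => i.
  have E : forall k, iter (n k) (diagN N T) (v M) i = iter (n k) T (v M i).
    by move=> k; rewrite iter_diagN.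
  move=> A /(cv _ (Hu (M, i)).1); rewrite !nbhs_simpl /=.
  by apply: filterS => k /=; rewrite E.
have cB : \forall k \near \oo, B (iter (n k) (diagN N T) (v M)) := cvv B BvM.
have [K _ HK] := filterI cB (nbhs_infty_ge 1).
have [HB K1] := HK K (leqnn K).
have n0 : (0 < n K)%N by apply: leq_ltn_trans (hn 0%N K K1).
exists (iter (n K) (diagN N T) (v M)); split => //.
by exists (n K).-1 => //; rewrite prednK.
Qed.

Lemma base_lemma (R : realType) (X : pseudoMetricType R) (x0 : X) :
  separable_space X ->
  exists (cen : nat -> X) (rad : nat -> R), (forall p, 0 < rad p) /\
    forall U : set X, open U -> U !=set0 -> exists p, ball (cen p) (rad p) `<=` U.
Proof.
move=> [D [cD dD]].
have [f finj] := countable_injP _ cD.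
pose g k := if pselect (exists x, D x /\ f x = k) is left h then proj1_sig (cid h) else x0.
have gf : forall d, D d -> g (f d) = d.
  move=> d Dd; rewrite /g; case: pselect => [h|[]]; last by exists d.
  case: (cid h) => x [Dx fx] /=.
  by apply: finj; rewrite ?inE.
pose pr p := odflt (0%N, 0%N) (unpickle p).
exists (fun p => g (pr p).1), (fun p => ((pr p).2.+1%:R)^-1).
split; first by move=> p; rewrite invr_gt0.
move=> U oU [x Ux].
have : nbhs x U by apply: open_nbhs_nbhs.
move=> /nbhs_ballP [e /= e0 sub].
have e20 : 0 < e / 2 by rewrite divr_gt0.
have [d [Dd xd]] := dense_ball x dD e20.
have [M HM] := inv_small e20.
exists (pickle (f d, M)).
rewrite /pr pickleK /= gf // => z dz.
apply: sub; apply: (ball_split xd).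
exact: (le_ball (ltW (HM M (leqnn M))) dz).
Qed.

Arguments base_lemma {R X} x0.

Lemma box_open (X : topologicalType) N (U : 'I_N -> set X) :
  (forall i, open (U i)) ->
  open ([set f | forall i, U i (f i)] : set {ptws 'I_N -> X}).
Proof.
move=> oU; rewrite openE => f Uf.
have H : forall i, \forall g \near (f : {ptws 'I_N -> X}), U i (g i).
  move=> i; apply: ptws_proj; rewrite nbhsE /=; exists (U i) => //.
exact: (@filter_forall {ptws 'I_N -> X} 'I_N (fun i g => U i (g i)) (nbhs f) (nbhs_filter f) H).
Qed.

Arguments box_open {X N U}.

Lemma continuous_iter (X : topologicalType) (T : X -> X) n :
  continuous T -> continuous (iter n T).
Proof.
move=> cT; elim: n => [|n IH] /=; first by move=> x; exact: cvg_id.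
move=> x; exact: (continuous_comp (IH x) (cT _)).
Qed.

Lemma many_returns (X : topologicalType) (T : X -> X) (cT : continuous T) :
  (forall N : nat, (0 < N)%N -> top_recurrent (diagN N T)) ->
  forall N : nat, (0 < N)%N -> forall (M : nat) (U : 'I_N -> set X),
  (forall i, open (U i)) -> (forall i, U i !=set0) ->
  exists n, (M < n)%N /\ exists x : 'I_N -> X, forall i, U i (x i) /\ U i (iter n T (x i)).
Proof.
move=> H N N0.
have step : forall U : 'I_N -> set X, (forall i, open (U i)) -> (forall i, U i !=set0) ->
  exists r, (0 < r)%N /\ exists x : 'I_N -> X, forall i, U i (x i) /\ U i (iter r T (x i)).
  move=> U oU nU.
  have [x0 Hx0] := choice (fun i => nU i).
  have [r [r0 [y [[x bx <-] bY]]]] := H N N0 _ (box_open oU) (ex_intro _ x0 Hx0).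
  exists r; split => //; exists x => i; split; first exact: bx.
  by move: (bY i); rewrite iter_diagN.
elim=> [|M IH] U oU nU.
  have [r [r0 Hr]] := step U oU nU; by exists r.
have [r [r0 [x Hx]]] := step U oU nU.
pose V := fun i => U i `&` (iter r T) @^-1` (U i).
have oV : forall i, open (V i).
  move=> i; apply: openI => //; apply: open_comp => //.
  by move=> y _; apply: continuous_iter.
have nV : forall i, V i !=set0 by move=> i; exists (x i); exact: Hx.
have [n [Mn [y Hy]]] := IH V oV nV.
exists (r + n)%N; split; first by rewrite -addn1 addnC leq_add.
exists y => i; have [[Uy _] [_ Uny]] := Hy i; split => //.
by rewrite iterD.
Qed.
Arguments many_returns {X T} cT.

Lemma iii_ii (R : realType) (X : pseudoMetricType R) (x0 : X) (sepX : separable_space X)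
  (T : X -> X) (cT : continuous T) :
  (forall N : nat, (0 < N)%N -> top_recurrent (diagN N T)) -> top_quasi_rigid T.
Proof.
move=> H.
have [cen [rad [rad0 bas]]] := base_lemma x0 sepX.
pose b := fun p => (ball (cen p) (rad p))°.
have ob : forall p, open (b p) by move=> p; exact: open_interior.
have nb : forall p, b p !=set0.
  by move=> p; exists (cen p); exact: nbhsx_ballx.
have MR := many_returns cT H.
have [nx Hnx] := choice (fun km : nat * nat =>
   MR km.1.+1 (ltn0Sn _) km.2 (fun i => b i) (fun i => ob i) (fun i => nb i)).
pose s := fix s k := if k is k'.+1 then nx (k, s k') else nx (0%N, 0%N).
have sS : forall k, (s k < s k.+1)%N by move=> k; exact: (Hnx (k.+1, s k)).1.
have sk : forall k, exists M, s k = nx (k, M) by case=> [|k]; [exists 0%N|exists (s k)].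
exists s; split; first exact: (homo_ltn ltn_trans sS).
move=> U oU nU.
have [p bU] := bas U oU nU.
exists p => k pk.
have [M ->] := sk k.
have [_ [x Hx]] := Hnx (k, M).
have pk' : (p < k.+1)%N by rewrite ltnS.
have [bx bnx] := Hx (Ordinal pk').
exists (iter (nx (k, M)) T (x (Ordinal pk'))); split.
  by exists (x (Ordinal pk')) => //; apply: bU; apply: interior_subset.
by apply: bU; apply: interior_subset.
Qed.

Section Construction.
Variables (R : realType) (X : completePseudoMetricType R) (T : X -> X).
Hypothesis cT : continuous T.
Variables (n : nat -> nat) (kU : set X -> nat) (w : set X -> nat -> X)
  (rsel : X -> set X -> R) (cen : nat -> X) (rad : nat -> R).
Hypothesis hn : {homo n : a b / (a < b)%N}.
Hypothesis Hw : forall U k, open U -> U !=set0 -> (kU U <= k)%N ->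
  U (w U k) /\ U (iter (n k) T (w U k)).
Hypothesis Hrsel : forall x V, 0 < rsel x V /\ (nbhs x V -> ball x (rsel x V) `<=` V).
Hypothesis rad0 : forall p, 0 < rad p.

Definition stT := (nat * (nat -> X) * (nat -> R))%type.
Definition Oset (c : nat -> X) (r : nat -> R) j : set X := (ball (c j) (r j / 4))°.
Definition Kn k (s : stT) :=
  maxn s.1.1.+1 (\max_(j < k.+1) kU (Oset s.1.2 s.2 j)).
Definition cnext k (s : stT) j :=
  if (j <= k)%N then w (Oset s.1.2 s.2 j) (Kn k s) else s.1.2 j.
Definition rnext k (s : stT) j :=
  Num.min (Num.min (s.2 j / 4) (k.+1%:R^-1))
    (if (j <= k)%N then rsel (cnext k s j) ((iter (n (Kn k s)) T) @^-1` (Oset s.1.2 s.2 j))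
     else 1).
Definition step k (s : stT) : stT := (Kn k s, cnext k s, rnext k s).
Fixpoint st k : stT := if k is k'.+1 then step k' (st k') else (0%N, cen, rad).
Definition idx k := (st k).1.1.
Definition cc k := (st k).1.2.
Definition rr k := (st k).2.
Definition qq k := n (idx k.+1).

Lemma rr_pos k j : 0 < rr k j.
Proof.
elim: k j => [|k IH] j /=; first exact: rad0.
rewrite /rr /= /rnext !lt_min; apply/andP; split; first (apply/andP; split).
- by rewrite divr_gt0 //; apply: IH.
- by rewrite invr_gt0.
- by case: ifP => _; [exact: (Hrsel _ _).1|].
Qed.

Lemma rr_le4 k j : rr k.+1 j <= rr k j / 4.
Proof. by rewrite /rr /= /rnext !ge_min lexx. Qed.

Lemma rr_leinv k j : rr k.+1 j <= k.+1%:R^-1.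
Proof. by rewrite /rr /= /rnext !ge_min lexx orbT. Qed.

Lemma Oset_prop k j : (j <= k)%N ->
  let O := Oset (cc k) (rr k) j in
  open O /\ O !=set0 /\ (kU O <= Kn k (st k))%N.
Proof.
move=> jk O; split; first exact: open_interior.
split.
  exists (cc k j); apply: nbhsx_ballx.
  by rewrite divr_gt0 // rr_pos.
rewrite /Kn; apply: leq_trans (leq_maxr _ _).
have jk' : (j < k.+1)%N by rewrite ltnS.
rewrite /O /cc /rr.
have := (@leq_bigmax _ (fun i : 'I_k.+1 => kU (Oset (st k).1.2 (st k).2 i)) (Ordinal jk')).
exact.
Qed.

Lemma cc_step k j : ball (cc k j) (rr k j / 4) (cc k.+1 j).
Proof.
rewrite /cc /= /cnext; case: ifP => jk.
  have [oO [nO kO]] := Oset_prop k j jk.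
  have [h _] := Hw _ _ oO nO kO.
  exact: interior_subset h.
by apply: ballxx; by rewrite divr_gt0 // rr_pos.
Qed.

Lemma P4 k j : (j <= k)%N ->
  ball (cc k.+1 j) (rr k.+1 j) `<=` (iter (qq k) T) @^-1` (ball (cc k j) (rr k j / 4)).
Proof.
move=> jk.
have [oO [nO kO]] := Oset_prop k j jk.
have [_ h] := Hw _ _ oO nO kO.
have nb : nbhs (cc k.+1 j) ((iter (n (Kn k (st k))) T) @^-1` (Oset (cc k) (rr k) j)).
  have := @continuous_iter _ _ (n (Kn k (st k))) cT (cc k.+1 j).
  apply; apply: open_nbhs_nbhs; split => //.
  by rewrite /cc /= /cnext jk.
have := (Hrsel (cc k.+1 j) ((iter (n (Kn k (st k))) T) @^-1` (Oset (cc k) (rr k) j))).2 nb.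
move=> sub z bz.
have : ball (cc k.+1 j) (rsel (cc k.+1 j) ((iter (n (Kn k (st k))) T) @^-1` (Oset (cc k) (rr k) j))) z.
  apply: le_ball bz; rewrite /rr /= /rnext jk /cc /=.
  by rewrite ge_min lexx orbT.
move=> /sub; rewrite /qq /idx /=.
exact: interior_subset.
Qed.

Lemma P3 k j : ball (cc k.+1 j) (rr k.+1 j) `<=` ball (cc k j) (rr k j / 2).
Proof.
move=> z bz.
have := ball_triangle (cc_step k j) bz.
apply: le_ball.
have := rr_le4 k j; have := rr_pos k j.
move=> h1 h2; lra.
Qed.

Lemma P5 K d j : ball (cc (K + d) j) (rr (K + d) j / 2) `<=` ball (cc K j) (rr K j / 2).
Proof.
elim: d => [|d IH]; first by rewrite addn0.
rewrite addnS => z bz; apply: IH; apply: P3.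
apply: le_ball bz; have := rr_pos (K + d).+1 j; move=> h; lra.
Qed.

Lemma idx_lt k : (idx k < idx k.+1)%N.
Proof. by rewrite /idx /= /Kn leq_maxl. Qed.

Definition yy j := lim ((fun k => cc k j) @ \oo).

Lemma cc_cvg j : (fun k => cc k j) @ \oo --> yy j.
Proof.
apply: cauchy_cvg; apply: cauchy_exP => e e0.
have [M HM] := inv_small e0.
exists (cc M.+1 j).
apply: filterS (nbhs_infty_ge M.+1) => l Ml /=.
have r0 := rr_pos M.+1 j.
have -> : l = (M.+1 + (l - M.+1))%N by rewrite subnKC.
have r20 : 0 < rr (M.+1 + (l - M.+1)) j / 2 by rewrite divr_gt0 // rr_pos.
have h := P5 M.+1 (l - M.+1) j _ (ballxx _ r20).
apply: le_ball h.
have := rr_leinv M j; have := HM M (leqnn M).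
set a := (M.+1%:R^-1 : R); move=> h1 h2; lra.
Qed.

Lemma yy_in K j : ball (cc K j) (rr K j) (yy j).
Proof.
have r0 := rr_pos K j.
have hcl : closure (ball (cc K j) (rr K j / 2)) (yy j).
  apply: (@closed_cvg _ _ _ _ (fun k => cc k j) _ (@closed_closure _ _) _ _ (cc_cvg j)).
  apply: filterS (nbhs_infty_ge K) => l Kl; apply: subset_closure.
  rewrite -(subnKC Kl); apply: P5; apply: ballxx; by rewrite divr_gt0 // rr_pos.
have r20 : 0 < rr K j / 2 by rewrite divr_gt0.
have [z [bz bz']] := hcl _ (nbhsx_ballx (yy j) _ r20).
exact: ball_splitl bz bz'.
Qed.

Hypothesis bas : forall U : set X, open U -> U !=set0 -> exists p, ball (cen p) (rad p) `<=` U.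

Lemma construction_qr : quasi_rigid T.
Proof.
exists qq, (range yy); split.
  apply: homo_ltn; first by move=> a b c; exact: ltn_trans.
  move=> k; rewrite /qq; apply: hn; exact: idx_lt.
split.
  move=> U nU oU; have [p sub] := bas U oU nU.
  exists (yy p); split; last by exists p.
  apply: sub; exact: (yy_in 0 p).
move=> x [j _ <-]; apply/cvg_ballP => e e0.
have e20 : 0 < e / 2 by rewrite divr_gt0.
have [M HM] := inv_small e20.
apply: filterS (nbhs_infty_ge (maxn j M.+1)) => k /=.
rewrite geq_max => /andP [jk Mk].
have jk' : (j <= k)%N by apply: leq_trans jk.
have := P4 k j jk' _ (yy_in k.+1 j).
rewrite /= => h.
have h2 := yy_in k j.
have := ball_triangle (ball_sym h2) h.
apply: le_ball.
have r0 := rr_pos k j.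
case: k Mk jk jk' h h2 r0 => [//|k] Mk _ _ _ _ r0.
have := rr_leinv k j; have := HM k Mk.
set a := (k.+1%:R^-1 : R) => h1 h3; lra.
Qed.

End Construction.


Lemma ii_i (R : realType) (X : completePseudoMetricType R) (sepX : separable_space X)
  (T : X -> X) (cT : continuous T) : top_quasi_rigid T -> quasi_rigid T.
Proof.
move=> [n [hn Hq]].
pose x0 : X := point.
have [cen [rad [rad0 bas]]] := base_lemma x0 sepX.
have H1 : forall U : set X, exists K : nat, (open U -> U !=set0 ->
    forall k, (K <= k)%N -> (iter (n k) T @` U) `&` U !=set0).
  move=> U; case: (pselect (open U /\ U !=set0)) => [[oU nU]|h].
    by have [K HK] := Hq U oU nU; exists K.
  by exists 0%N => oU nU; exfalso; exact: h.
have [kU HkU] := choice H1.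
have H2 : forall Uk : set X * nat, exists x : X, open Uk.1 -> Uk.1 !=set0 ->
    (kU Uk.1 <= Uk.2)%N -> Uk.1 x /\ Uk.1 (iter (n Uk.2) T x).
  move=> [U k] /=; case: (pselect (open U /\ U !=set0 /\ (kU U <= k)%N)) => [[oU [nU kk]]|h].
    by have [y [[x Ux <-] Uy]] := HkU U oU nU k kk; exists x.
  by exists x0 => oU nU kk; exfalso; exact: h.
have [w' Hw'] := choice H2.
have H3 : forall xV : X * set X, exists e : R, 0 < e /\ (nbhs xV.1 xV.2 -> ball xV.1 e `<=` xV.2).
  move=> [x V] /=; case: (pselect (nbhs x V)) => [/nbhs_ballP [e e0 sub]|h].
    by exists e.
  by exists 1; split => // /h.
have [rs Hrs] := choice H3.
apply: (@construction_qr R X T cT n kU (fun U k => w' (U, k)) (fun x V => rs (x, V)) cen rad hn).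
- by move=> U k; exact: (Hw' (U, k)).
- by move=> x V; exact: (Hrs (x, V)).
- exact: rad0.
- exact: bas.
Qed.

Theorem mainTheorem3 (R : realType) (X : completePseudoMetricType R)
  (hX : hausdorff_space X) (sepX : separable_space X)
  (T : X -> X) (cT : continuous T) :
  [/\ (quasi_rigid T <-> top_quasi_rigid T),
      (top_quasi_rigid T <-> forall N : nat, (0 < N)%N -> top_recurrent (diagN N T)) &
      ((forall N : nat, (0 < N)%N -> top_recurrent (diagN N T)) <->
       (forall N : nat, (0 < N)%N -> recurrent (diagN N T)))].
Proof.
have x0 : X := point.
have iii_ii' := @iii_ii R X x0 sepX T cT.
have ii_i' := @ii_i R X sepX T cT.
have i_iv' := @i_iv R X T.
have iv_iii' : (forall N : nat, (0 < N)%N -> recurrent (diagN N T)) ->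
    forall N : nat, (0 < N)%N -> top_recurrent (diagN N T).
  by move=> h N N0; apply: iv_iii; exact: h.
split; split.
- exact: i_ii.
- exact: ii_i'.
- by move=> h; apply: iv_iii'; apply: i_iv'; apply: ii_i'.
- exact: iii_ii'.
- by move=> h; apply: i_iv'; apply: ii_i'; apply: iii_ii'.
- exact: iv_iii'.
Qed.
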